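(* Let $A$ be a finite-dimensional semisimple $\mathbb Z_2$-graded algebra over $\mathbb C$ and $B\subset A$ a semisimple graded subalgebra. Then the graded centralizer $Z(A,B)$ equals the ordinary centralizer $Z(A_0,B_0)=\{a\in A_0: ab=ba \text{ for all } b\in B_0\}$ of the even part $B_0$ in the even part $A_0$.
   Context: For a $\mathbb Z_2$-graded algebra $A=A_0\oplus A_1$, the parity automorphism $\theta$ acts as $+1$ on $A_0$ and $-1$ on $A_1$. For a graded subalgebra $B$ (with $B_i=B\cap A_i$), the graded centralizer is $Z(A,B)=Z_0(|A|,|B|)+Z_0^\theta(|A|,|B|)$, where $Z_0(|A|,|B|)=\{a\in A_0: ab=ba\ \forall b\in B\}$ and $Z_0^\theta(|A|,|B|)=\{a\in A_0: ab=\theta(b)a\ \forall b\in B\}$. Semisimplicity of a graded algebra: every two-sided graded ideal has a graded complementary two-sided ideal (for finite-dimensional algebras this is equivalent to ordinary semisimplicity). *)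

(* Defs.v *)
From HB Require Import structures.
From mathcomp Require Import all_boot all_order all_algebra all_field.
Set Implicit Arguments. Unset Strict Implicit. Unset Printing Implicit Defensive.
Import GRing.Theory.
Local Open Scope ring_scope.


Section Graded.
Variables (F : fieldType) (A : falgType F).

Definition Z2_grading (A0 A1 : {vspace A}) : Prop :=
  [/\ directv (A0 + A1)%VS, (A0 + A1)%VS = fullv,
      (A0 * A0 <= A0)%VS, (A0 * A1 <= A1)%VS & ((A1 * A0 <= A1)%VS /\ (A1 * A1 <= A0)%VS)].

Definition parity (A0 A1 : {vspace A}) (x : A) : A :=
  daddv_pi A0 A1 x - daddv_pi A1 A0 x.

Definition graded (A0 A1 V : {vspace A}) : Prop :=
  V = ((V :&: A0) + (V :&: A1))%VS.

Definition graded_subalgebra (A0 A1 B : {vspace A}) : Prop :=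
  [/\ (1%R : A) \in B, (B * B <= B)%VS & graded A0 A1 B].

Definition two_sided_ideal (S I : {vspace A}) : Prop :=
  [/\ (I <= S)%VS, (S * I <= I)%VS & (I * S <= I)%VS].

Definition graded_semisimple (A0 A1 S : {vspace A}) : Prop :=
  forall I : {vspace A}, two_sided_ideal S I -> graded A0 A1 I ->
    exists J : {vspace A},
      [/\ two_sided_ideal S J, graded A0 A1 J, (I + J)%VS = S & (I :&: J)%VS = 0%VS].

Definition Z0 (A0 B : {vspace A}) (a : A) : Prop :=
  a \in A0 /\ forall b, b \in B -> a * b = b * a.

Definition Z0theta (A0 A1 B : {vspace A}) (a : A) : Prop :=
  a \in A0 /\ forall b, b \in B -> a * b = parity A0 A1 b * a.

Definition graded_centralizer (A0 A1 B : {vspace A}) (a : A) : Prop :=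
  exists z1 z2, [/\ Z0 A0 B z1, Z0theta A0 A1 B z2 & a = z1 + z2].

Definition even_centralizer (A0 B : {vspace A}) (a : A) : Prop :=
  a \in A0 /\ forall b, b \in (B :&: A0)%VS -> a * b = b * a.

End Graded.

(* Main.v *)
Require Import Defs.
From HB Require Import structures.
From mathcomp Require Import all_boot all_order all_algebra all_field.
Set Implicit Arguments. Unset Strict Implicit. Unset Printing Implicit Defensive.
Import GRing.Theory.
Local Open Scope ring_scope.
Section MX.
Variable F : fieldType.
Hypothesis charF0 : [pchar F] =i pred0.

Lemma natr_eq0F (k : nat) : (k%:R == 0 :> F) = (k == 0)%N.
Proof. by have /pcharf0P := charF0; apply. Qed.

Lemma sum_ltn n r : (r <= n)%N -> (\sum_(i < n) nat_of_bool (i < r)%N)%N = r.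
Proof.
move=> le_rn; rewrite -(big_mkord xpredT (fun i => nat_of_bool (i < r)%N)).
rewrite (big_cat_nat (leq0n r) le_rn) /=.
rewrite big_nat_cond (eq_bigr (fun _ => 1%N)); last first.
  by move=> i /andP[/andP[_ ->]].
rewrite -big_nat_cond sum1_size size_iota subn0.
rewrite big_nat_cond big1 ?addn0 // => i /andP[/andP[ri _] _].
by rewrite ltnNge ri.
Qed.

Lemma tr_pid n r : (r <= n)%N -> \tr (pid_mx r : 'M[F]_n) = r%:R.
Proof.
move=> le_rn; rewrite /mxtrace.
under eq_bigr do rewrite mxE eqxx /=.
by rewrite -natr_sum sum_ltn.
Qed.

Lemma idem_tr0 n (P : 'M[F]_n) : P *m P = P -> \tr P = 0 -> P = 0.
Proof.
move=> PP trP.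
set L := col_ebase P; set U := row_ebase P; set r := \rank P.
have DP : P = L *m pid_mx r *m U by rewrite mulmx_ebase.
have uL : L \in unitmx by apply: col_ebase_unit.
have uU : U \in unitmx by apply: row_ebase_unit.
have key : pid_mx r *m (U *m L) *m pid_mx r = pid_mx r :> 'M[F]_n.
  have := PP; rewrite DP.
  rewrite !mulmxA => /(congr1 (mulmx (invmx L))).
  rewrite !mulmxA mulVmx // !mul1mx => /(congr1 (mulmx^~ (invmx U))).
  by rewrite -!mulmxA mulmxV // mulmx1 !mulmxA.
have trr : \tr P = r%:R.
  have E : pid_mx r = (pid_mx r : 'M[F]_n) *m (pid_mx r : 'M[F]_n).
    by rewrite pid_mx_id // rank_leq_row.
  rewrite DP -mulmxA mxtrace_mulC {1}E -!mulmxA mxtrace_mulC !mulmxA.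
  by rewrite -(mulmxA _ U L) key tr_pid //; exact: rank_leq_row.
move: trP; rewrite trr => /eqP; rewrite natr_eq0F => /eqP r0.
by apply/eqP; rewrite -mxrank_eq0 -/r r0.
Qed.
End MX.
Section Newton.
Variable F : fieldType.
Hypothesis charF0 : [pchar F] =i pred0.

Lemma horner_mx_expand n' (M : 'M[F]_n'.+1) p :
  horner_mx M p = \sum_(i < size p) p`_i *: M ^+ i.
Proof.
rewrite -{1}(coefK p) poly_def rmorph_sum /=; apply: eq_bigr => i _.
by rewrite linearZ /= rmorphXn /= horner_mx_X.
Qed.

Lemma tr_hornerX n' (M : 'M[F]_n'.+1) p :
  (forall k, (0 < k)%N -> \tr (M ^+ k) = 0) -> \tr (horner_mx M ('X * p)) = 0.
Proof.
move=> trM; rewrite rmorphM /= horner_mx_X horner_mx_expand mulr_sumr.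
rewrite raddf_sum /=; apply: big1 => i _.
by rewrite -scalerAr -exprS mxtraceZ trM ?mulr0.
Qed.

Lemma nil_of_tr n (M : 'M[F]_n) :
  (forall k, (0 < k)%N -> \tr (M ^+ k) = 0) -> exists m, M ^+ m = 0.
Proof.
case: n M => [|n'] M trM.
  by exists 1%N; apply/matrixP => -[].
set p := char_poly M.
have CH : horner_mx M p = 0 by apply: Cayley_Hamilton.
set q := 'X * p.
have pn0 : p != 0 by apply: monic_neq0; apply: char_poly_monic.
have qn0 : q != 0 by rewrite mulf_neq0 ?polyX_eq0.
have hq : horner_mx M q = 0 by rewrite rmorphM /= CH mulr0.
have [m [r nr Dq]] := multiplicity_XsubC q 0.
move: nr; rewrite qn0 /= => nr.
rewrite polyC0 subr0 in Dq.
have m0 : (0 < m)%N.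
  case: m Dq => // Dq; move: nr; rewrite -(mulr1 r) -(expr0 'X) -Dq.
  by rewrite rootM rootX eqxx.
have cop : coprimep ('X ^+ m) r.
  by apply: coprimep_expl; rewrite coprimep_sym coprimepX.
have [[u1 u2] /= Huv] := Bezout_eq1_coprimepP _ _ cop.
set a := u1 * 'X ^+ m; set b := u2 * r.
have hab : horner_mx M a * horner_mx M b = 0.
  rewrite -rmorphM /= /a /b mulrA -(mulrA u1) (mulrC ('X ^+ m)) mulrA.
  by rewrite -(mulrA (u1 * u2)) (mulrC ('X ^+ m)) -Dq rmorphM /= hq mulr0.
have hb : horner_mx M b = 1 - horner_mx M a.
  by rewrite -(rmorph1 (horner_mx M)) -Huv rmorphD /= addrC addKr.
have ha : horner_mx M a = 1 - horner_mx M b by rewrite hb opprB addrC subrK.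
have Pid : horner_mx M a *m horner_mx M a = horner_mx M a.
  by rewrite mulmxE {2}ha mulrBr mulr1 hab subr0.
have tra : \tr (horner_mx M a) = 0.
  rewrite /a -(prednK m0) exprS mulrCA; exact: tr_hornerX.
have a0 := idem_tr0 charF0 Pid tra.
exists m; rewrite -(horner_mx_X M) -rmorphXn -[LHS]mulr1.
have -> : (1 : 'M_n'.+1) = horner_mx M b by rewrite hb a0 subr0.
by rewrite -rmorphM /b mulrCA (mulrC ('X ^+ m)) -Dq rmorphM /= hq mulr0.
Qed.

Lemma prodX_seq (R : nzRingType) (s : seq R) :
  \prod_(z <- s) ('X : {poly R}) = 'X ^+ size s.
Proof. by elim: s => [|z s IH]; rewrite ?big_nil ?big_cons ?IH ?exprS. Qed.

End Newton.

Lemma tr_nil (F : closedFieldType) n (M : 'M[F]_n) m : M ^+ m = 0 -> \tr M = 0.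
Proof.
case: n M => [|n'] M Mm; first by rewrite /mxtrace big_ord0.
have [rs Drs] := closed_field_poly_normal (char_poly M).
rewrite (monicP (char_poly_monic M)) scale1r in Drs.
have z0 : forall z, z \in rs -> z = 0.
  move=> z zr; have : root (char_poly M) z by rewrite Drs root_prod_XsubC.
  rewrite -eigenvalue_root_char => /eigenvalueP [v vM vn0].
  have vMk : forall k, v *m M ^+ k = z ^+ k *: v.
    elim=> [|k IH]; first by rewrite expr0 mulmx1 scale1r.
    by rewrite exprSr -mulmxE mulmxA IH -scalemxAl vM scalerA -exprSr.
  have := vMk m; rewrite Mm mulmx0 => /esym/eqP.
  by rewrite scaler_eq0 (negPf vn0) orbF expf_eq0 => /andP[_ /eqP].
have Dc : char_poly M = 'X ^+ size rs.
  rewrite Drs -prodX_seq; apply: eq_big_seq => z /z0 ->.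
  by rewrite polyC0 subr0.
have szr : size rs = n'.+1.
  by have := size_char_poly M; rewrite Dc size_polyXn => -[].
have := char_poly_trace M (ltn0Sn n'); rewrite Dc szr coefXn /=.
rewrite eqn_leq ltnn andbF /= => /eqP; rewrite eq_sym oppr_eq0 => /eqP; exact.
Qed.
Section VT.
Variables (F : fieldType) (A : falgType F).

Definition mxV (V : {vspace A}) (g : 'End(A)) : 'M[F]_(\dim V) :=
  \matrix_(i, j) coord (vbasis V) j (g (vbasis V)`_i).

Lemma basis_in (V : {vspace A}) (i : 'I_(\dim V)) : (vbasis V)`_i \in V.
Proof. by apply: vbasis_mem; apply: mem_nth; rewrite size_tuple. Qed.

Lemma amullE (w u : A) : amull w u = w * u.
Proof. by rewrite lfunE. Qed.

Lemma mxV_ext (V : {vspace A}) (g h : 'End(A)) : {in V, g =1 h} -> mxV V g = mxV V h.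
Proof. by move=> gh; apply/matrixP => i j; rewrite !mxE gh // basis_in. Qed.

Lemma mxV_comp (V : {vspace A}) (g h : 'End(A)) : {in V, forall v, h v \in V} ->
  mxV V (g \o h)%VF = mxV V h *m mxV V g.
Proof.
move=> hV; apply/matrixP => i k; rewrite !mxE comp_lfunE.
rewrite {1}(coord_vbasis (hV _ (basis_in i))) linear_sum linear_sum /=.
by apply: eq_bigr => j _; rewrite !linearZ /= !mxE.
Qed.

Lemma mxVD (V : {vspace A}) (g h : 'End(A)) : mxV V (g + h)%R = mxV V g + mxV V h.
Proof. by apply/matrixP => i j; rewrite !mxE add_lfunE linearD. Qed.

Lemma mxVZ (V : {vspace A}) c (g : 'End(A)) : mxV V (c *: g)%R = c *: mxV V g.
Proof. by apply/matrixP => i j; rewrite !mxE scale_lfunE linearZ. Qed.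

Lemma mxV0 (V : {vspace A}) (g : 'End(A)) : {in V, forall v, g v = 0} -> mxV V g = 0.
Proof. by move=> g0; apply/matrixP => i j; rewrite !mxE g0 ?basis_in // linear0. Qed.

Lemma mxV1 (V : {vspace A}) : mxV V \1%VF = 1.
Proof.
apply/matrixP => i j; rewrite !mxE id_lfunE coord_free //.
exact: basis_free (vbasisP V).
Qed.

Lemma powV (V : {vspace A}) (u : A) k : {in V, forall v, u * v \in V} -> {in V, forall v, u ^+ k * v \in V}.
Proof.
move=> uV; elim: k => [|k IH] v Vv; first by rewrite expr0 mul1r.
by rewrite exprS -mulrA uV // IH.
Qed.

Lemma mxV_amullX (V : {vspace A}) (u : A) k : {in V, forall v, u * v \in V} ->
  mxV V (amull (u ^+ k)) = mxV V (amull u) ^+ k.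
Proof.
move=> uV; elim: k => [|k IH]; first by rewrite expr0 amull1 mxV1.
rewrite [RHS]exprSr -IH -mulmxE -mxV_comp; last by move=> v Vv; rewrite amullE powV.
by apply: mxV_ext => v _; rewrite comp_lfunE !amullE exprS mulrA.
Qed.

Lemma nil_elem (V : {vspace A}) (u : A) : [pchar F] =i pred0 -> 1 \in V -> {in V, forall v, u * v \in V} ->
  (forall k, (0 < k)%N -> \tr (mxV V (amull (u ^+ k))) = 0) -> exists m, u ^+ m = 0.
Proof.
move=> ch0 V1 uV trk.
have [m Mm] : exists m, mxV V (amull u) ^+ m = 0.
  by apply: nil_of_tr => // k k0; rewrite -mxV_amullX // trk.
exists m; rewrite -[u ^+ m]mulr1 (coord_vbasis V1) mulr_sumr.
apply: big1 => i _; rewrite -scalerAr.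
have -> : u ^+ m * (vbasis V)`_i = 0; last by rewrite scaler0.
rewrite (coord_vbasis (powV m uV (basis_in i))); apply: big1 => j _.
have := congr1 (fun M : 'M_(\dim V) => M i j) Mm.
by rewrite -mxV_amullX // !mxE amullE => ->; rewrite scale0r.
Qed.

End VT.

Lemma tr_nil_elem (C : closedFieldType) (A' : falgType C) (V : {vspace A'}) u m :
  {in V, forall v, u * v \in V} -> u ^+ m = 0 -> \tr (mxV V (amull u)) = 0.
Proof.
move=> uV um; apply: (@tr_nil _ _ _ m).
rewrite -mxV_amullX // um; apply: mxV0 => v _.
by rewrite amullE mul0r.
Qed.

Section Main.
Variables (F : closedFieldType) (A : falgType F) (A0 A1 B : {vspace A}).
Hypothesis ch0 : [pchar F] =i pred0.
Hypothesis Hgr : Z2_grading A0 A1.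
Hypothesis HB : graded_subalgebra A0 A1 B.
Hypothesis HssB : graded_semisimple A0 A1 B.

Local Notation P0 := (daddv_pi A0 A1).
Local Notation P1 := (daddv_pi A1 A0).
Local Notation B0 := (B :&: A0)%VS.
Local Notation B1 := (B :&: A1)%VS.

Lemma dir01 : (A0 :&: A1 = 0)%VS.
Proof. by case: Hgr => /directv_addP. Qed.
Lemma dir10 : (A1 :&: A0 = 0)%VS.
Proof. by rewrite capvC dir01. Qed.

Lemma decA w : w = P0 w + P1 w.
Proof.
case: Hgr => _ full _ _ _.
by rewrite daddv_pi_add ?dir01 // full memvf.
Qed.

Lemma P0_A0 w : w \in A0 -> P0 w = w.
Proof. exact: daddv_pi_id dir01. Qed.
Lemma P1_A1 w : w \in A1 -> P1 w = w.
Proof. exact: daddv_pi_id dir10. Qed.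
Lemma P0_A1 w : w \in A1 -> P0 w = 0.
Proof. by move=> /P1_A1 h; have := decA w; rewrite h => /esym E; rewrite -(addrK w (P0 w)) E subrr. Qed.
Lemma P1_A0 w : w \in A0 -> P1 w = 0.
Proof. by move=> /P0_A0 h; have := decA w; rewrite h => /esym E; rewrite -(addKr w (P1 w)) E addNr. Qed.

Lemma m00 x y : x \in A0 -> y \in A0 -> x * y \in A0.
Proof. by case: Hgr => _ _ H _ _ hx hy; apply: (subvP H); apply: memv_mul. Qed.
Lemma m01 x y : x \in A0 -> y \in A1 -> x * y \in A1.
Proof. by case: Hgr => _ _ _ H _ hx hy; apply: (subvP H); apply: memv_mul. Qed.
Lemma m10 x y : x \in A1 -> y \in A0 -> x * y \in A1.
Proof. by case: Hgr => _ _ _ _ [H _] hx hy; apply: (subvP H); apply: memv_mul. Qed.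
Lemma m11 x y : x \in A1 -> y \in A1 -> x * y \in A0.
Proof. by case: Hgr => _ _ _ _ [_ H] hx hy; apply: (subvP H); apply: memv_mul. Qed.

Lemma one0 : (1 : A) \in A0.
Proof.
set e0 := P0 1; set e1 := P1 1.
have h0 : e0 \in A0 by apply: memv_pi.
have h1 : e1 \in A1 by apply: memv_pi.
have D1 : (1 : A) = e0 + e1 by apply: decA.
have e01 : e0 * e1 = 0.
  have := congr1 P1 (congr1 (fun z => e0 * z) D1).
  rewrite mulr1 mulrDr linearD /= P1_A0 // P1_A0 ?m00 // P1_A1 ?m01 //.
  by rewrite add0r => <-.
have : e1 = 0.
  have := congr1 P1 (congr1 (fun z => z * e1) D1).
  rewrite mul1r mulrDl linearD /= P1_A1 // P1_A1 ?m01 // P1_A0 ?m11 //.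
  by rewrite addr0 e01.
by move=> e10; rewrite D1 e10 addr0.
Qed.

Lemma B1mem : (1 : A) \in B. Proof. by case: HB. Qed.
Lemma mulB x y : x \in B -> y \in B -> x * y \in B.
Proof. by case: HB => _ H _ hx hy; apply: (subvP H); apply: memv_mul. Qed.

Lemma decB b : b \in B -> P0 b \in B0 /\ P1 b \in B1.
Proof.
case: HB => _ _ gB; rewrite [in X in X -> _]gB => /memv_addP [b0 hb0 [b1 hb1 ->]].
move: hb0 hb1 => /memv_capP [Bb0 Ab0] /memv_capP [Bb1 Ab1].
rewrite !linearD /= P0_A0 // P0_A1 // P1_A0 // P1_A1 // addr0 add0r.
by split; apply/memv_capP.
Qed.

Lemma powB x k : x \in B -> x ^+ k \in B.
Proof. by move=> hx; elim: k => [|k IH]; rewrite ?expr0 ?B1mem // exprS mulB. Qed.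

Definition f (w : A) : F := \tr (mxV B (amull w)).

Lemma fD x y : f (x + y) = f x + f y.
Proof. by rewrite /f linearD mxVD mxtraceD. Qed.
Lemma fZ c x : f (c *: x) = c * f x.
Proof. by rewrite /f linearZ mxVZ mxtraceZ. Qed.
Lemma f0 : f 0 = 0.
Proof. by have := fZ 0 0; rewrite scale0r mul0r. Qed.
Lemma f_sum (I : Type) (r : seq I) (P : pred I) (g : I -> A) :
  f (\sum_(i <- r | P i) g i) = \sum_(i <- r | P i) f (g i).
Proof. exact: (big_morph f fD f0). Qed.

Lemma fC p q : p \in B -> q \in B -> f (p * q) = f (q * p).
Proof.
move=> hp hq; rewrite /f.
have E x y : y \in B -> mxV B (amull (x * y)) = mxV B (amull y) *m mxV B (amull x).
  move=> hy; rewrite -mxV_comp; last by move=> v hv; rewrite amullE mulB.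
  by apply: mxV_ext => v _; rewrite comp_lfunE !amullE mulrA.
by rewrite E // E // mxtrace_mulC.
Qed.

Lemma tr_conj0 (L P : 'End(A)) :
  {in B, forall v, P v \in B} -> {in B, forall v, L v \in B} ->
  {in B, forall v, P (P v) = P v} -> {in B, forall v, P (L (P v)) = 0} ->
  \tr (mxV B (L \o P)%VF) = 0.
Proof.
move=> PB LB PP PLP.
have LPB : {in B, forall v, (L \o P)%VF v \in B}.
  by move=> v hv; rewrite comp_lfunE LB ?PB.
rewrite mxV_comp // (mxV_ext (g := P) (h := (P \o P)%VF)); last first.
  by move=> v hv; rewrite comp_lfunE PP.
rewrite mxV_comp // -mulmxA mxtrace_mulC -mxV_comp // -mxV_comp //.
by rewrite mxV0 ?mxtrace0 // => v hv; rewrite !comp_lfunE PLP.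
Qed.

Lemma fodd w : w \in B1 -> f w = 0.
Proof.
move=> /memv_capP [wB wA1].
have P0B v : v \in B -> P0 v \in B by move=> /decB [/memv_capP [] ].
have P1B v : v \in B -> P1 v \in B by move=> /decB [_ /memv_capP [] ].
have LB : {in B, forall v, amull w v \in B} by move=> v hv; rewrite amullE mulB.
rewrite /f (mxV_ext (g := amull w) (h := ((amull w \o P0)%VF + (amull w \o P1)%VF)%R)); last first.
  by move=> v _; rewrite add_lfunE !comp_lfunE -linearD /= -decA.
rewrite mxVD mxtraceD !tr_conj0 ?addr0 //.
all: move=> v _; rewrite ?amullE.
all: first [ by rewrite daddv_pi_proj // ?dir10 ?dir01
           | by rewrite P1_A0 // m11 // memv_pi
           | by rewrite P0_A1 // m10 // memv_pi ].
Qed.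


Local Notation X := (vbasis B).

Definition radf (v : A) : A := \sum_(i < \dim B) f (X`_i * v) *: X`_i.

Fact radf_lin : linear radf.
Proof.
move=> c x y; rewrite /radf scaler_sumr -big_split /=; apply: eq_bigr => i _.
by rewrite mulrDr fD -scalerAr fZ scalerDl scalerA.
Qed.

HB.instance Definition _ := GRing.isLinear.Build F A A *:%R radf radf_lin.

Definition rad : {vspace A} := (B :&: lker (linfun radf))%VS.

Lemma radP v : reflect (v \in B /\ forall p, p \in B -> f (p * v) = 0) (v \in rad).
Proof.
apply: (iffP memv_capP) => [[vB]|[vB H]]; last first.
  split=> //; rewrite memv_ker lfunE /= /radf big1 // => i _.
  by rewrite H ?basis_in // scale0r.
rewrite memv_ker lfunE /= => /eqP h; split=> // p pB.
have hc := (freeP (basis_free (vbasisP B))) (fun i => f (X`_i * v)) h.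
rewrite (coord_vbasis pB) mulr_suml f_sum big1 // => i _.
by rewrite -scalerAl fZ hc mulr0.
Qed.

Lemma B1_mem x : x \in B -> x \in A1 -> x \in B1.
Proof. by move=> h1 h2; apply/memv_capP. Qed.

Lemma evenpart p v : p \in B -> v \in B -> f (p * P0 v) = f (P0 p * v).
Proof.
move=> pB vB; have [/memv_capP [p0B p0A] /memv_capP [p1B p1A]] := decB pB.
have [/memv_capP [v0B v0A] /memv_capP [v1B v1A]] := decB vB.
rewrite {1}(decA p) {2}(decA v) mulrDl mulrDr !fD.
rewrite (fodd (B1_mem (mulB p1B v0B) (m10 p1A v0A))).
by rewrite (fodd (B1_mem (mulB p0B v1B) (m01 p0A v1A))).
Qed.

Lemma oddpart p v : p \in B -> v \in B -> f (p * P1 v) = f (P1 p * v).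
Proof.
move=> pB vB; have [/memv_capP [p0B p0A] /memv_capP [p1B p1A]] := decB pB.
have [/memv_capP [v0B v0A] /memv_capP [v1B v1A]] := decB vB.
rewrite {1}(decA p) {2}(decA v) mulrDl mulrDr !fD.
rewrite (fodd (B1_mem (mulB p1B v0B) (m10 p1A v0A))).
by rewrite (fodd (B1_mem (mulB p0B v1B) (m01 p0A v1A))).
Qed.

Lemma P0B v : v \in B -> P0 v \in B.
Proof. by move=> /decB [/memv_capP []]. Qed.
Lemma P1B v : v \in B -> P1 v \in B.
Proof. by move=> /decB [_ /memv_capP []]. Qed.

Lemma rad_ideal : two_sided_ideal B rad.
Proof.
split; first exact: capvSl.
  apply/prodvP => p v pB /radP [vB H]; apply/radP; split; first exact: mulB.
  by move=> q qB; rewrite mulrA H // mulB.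
apply/prodvP => v p /radP [vB H] pB; apply/radP; split; first exact: mulB.
by move=> q qB; rewrite mulrA fC ?mulB // mulrA H // mulB.
Qed.

Lemma rad_graded : graded A0 A1 rad.
Proof.
apply/eqP; rewrite eqEsubv; apply/andP; split; last by rewrite subv_add !capvSl.
apply/subvP => v /radP [vB H]; rewrite (decA v); apply: memv_add; apply/memv_capP.
  split; last exact: memv_pi.
  by apply/radP; split; [exact: P0B | move=> p pB; rewrite evenpart // H // P0B].
split; last exact: memv_pi.
by apply/radP; split; [exact: P1B | move=> p pB; rewrite oddpart // H // P1B].
Qed.

Lemma ND v : v \in B -> (forall p, p \in B -> f (p * v) = 0) -> v = 0.
Proof.
move=> vB Hv.
have [J [[JB BJ JBr] _ sumJ capJ]] := HssB rad_ideal rad_graded.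
have := B1mem; rewrite -sumJ => /memv_addP [r rR [j jJ D1]].
have rB : r \in B by move: rR => /radP [].
have jB : j \in B by apply: (subvP JB).
have in0 x : x \in rad -> x \in J -> x = 0.
  by move=> h1 h2; apply/eqP; rewrite -memv0 -capJ; apply/memv_capP.
have rj : r * j = 0.
  apply: in0; first by case: rad_ideal => _ _ /prodvP; apply.
  by move/prodvP: BJ; apply.
have rr : r * r = r by rewrite -{3}(mulr1 r) D1 mulrDr rj addr0.
have [m rm] : exists m, r ^+ m = 0.
  apply: (nil_elem ch0 B1mem) => [x xB|]; first exact: mulB.
  case=> // k _; rewrite -/(f _) exprSr.
  by move: rR => /radP [_ H]; apply: H; apply: powB.
have rk k : r ^+ k.+1 = r by elim: k => [|k IH]; rewrite ?expr1 // exprS IH rr.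
have r0 : r = 0.
  case: m rm => [|m]; last by rewrite rk.
  by rewrite expr0 => /eqP; rewrite oner_eq0.
have vR : v \in rad by apply/radP.
apply: in0 => //; rewrite -(mulr1 v) D1 r0 add0r.
by move/prodvP: BJ; apply.
Qed.

Lemma fN x : f (- x) = - f x.
Proof. by rewrite -scaleN1r fZ mulN1r. Qed.
Lemma fB x y : f (x - y) = f x - f y.
Proof. by rewrite fD fN. Qed.

Definition isdual (V : {vspace A}) (Y : 'I_(\dim V) -> A) :=
  (forall i, Y i \in V) /\ (forall i (j : 'I_(\dim V)), f ((vbasis V)`_j * Y i) = (j == i)%:R).

Arguments isdual : clear implicits.

Lemma dual_exists (V : {vspace A}) : (V <= B)%VS ->
  (forall v, v \in V -> (forall p, p \in V -> f (p * v) = 0) -> v = 0) ->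
  exists Y, isdual V Y.
Proof.
move=> VB ndV.
have xB (i : 'I_(\dim V)) : (vbasis V)`_i \in B by apply: (subvP VB); apply: basis_in.
pose G : 'M[F]_(\dim V) := \matrix_(j, k) f ((vbasis V)`_j * (vbasis V)`_k).
have Gu : G \in unitmx.
  rewrite -row_free_unit -kermx_eq0; apply/rowV0P => w /sub_kermxP wG.
  pose p := \sum_j w 0 j *: (vbasis V)`_j.
  have pV : p \in V by apply: memv_suml => j _; apply: memvZ; apply: basis_in.
  have px (k : 'I_(\dim V)) : f (p * (vbasis V)`_k) = 0.
    have := congr1 (fun M : 'M[F]_(1, \dim V) => M 0 k) wG; rewrite !mxE => <-.
    rewrite mulr_suml f_sum; apply: eq_bigr => j _.
    by rewrite -scalerAl fZ mxE.
  have p0 : p = 0.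
    apply: (ndV p pV) => q qV; rewrite fC ?(subvP VB) //.
    rewrite (coord_vbasis qV) mulr_sumr f_sum big1 // => k _.
    by rewrite -scalerAr fZ px mulr0.
  apply/rowP => j; rewrite mxE; exact: (freeP (basis_free (vbasisP V))) _ p0 j.
exists (fun i => \sum_k (invmx G) k i *: (vbasis V)`_k); split.
  by move=> i; apply: memv_suml => k _; apply: memvZ; apply: basis_in.
move=> i j; rewrite mulr_sumr f_sum.
have := congr1 (fun M : 'M[F]_(\dim V) => M j i) (mulmxV Gu); rewrite !mxE => <-.
by apply: eq_bigr => k _; rewrite -scalerAr fZ mxE mulrC.
Qed.

Lemma coordE (V : {vspace A}) Y : isdual V Y -> forall v (i : 'I_(\dim V)), v \in V ->
  coord (vbasis V) i v = f (v * Y i).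
Proof.
move=> [_ hY] v i vV.
rewrite {2}(coord_vbasis vV) mulr_suml f_sum (bigD1 i) //= -scalerAl fZ hY eqxx mulr1.
rewrite big1 ?addr0 // => j ji.
by rewrite -scalerAl fZ hY (negPf ji) mulr0.
Qed.

Lemma expandE (V : {vspace A}) Y : (V <= B)%VS ->
  (forall v, v \in V -> (forall p, p \in V -> f (p * v) = 0) -> v = 0) ->
  isdual V Y -> forall v, v \in V ->
  v = \sum_(i < \dim V) f ((vbasis V)`_i * v) *: Y i.
Proof.
move=> VB ndV [YV hY] v vV.
apply/eqP; rewrite -subr_eq0; apply/eqP; apply: ndV.
  by apply: memvB => //; apply: memv_suml => i _; apply: memvZ.
move=> q qV; rewrite (coord_vbasis qV) mulr_suml f_sum big1 // => k _.
rewrite -scalerAl fZ mulrBr fB mulr_sumr f_sum (bigD1 k) //=.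
rewrite -scalerAr fZ hY eqxx mulr1 big1 ?addr0 ?subrr ?mulr0 // => i ik.
by rewrite -scalerAr fZ hY eq_sym (negPf ik) mulr0.
Qed.

Definition S (V : {vspace A}) (Y : 'I_(\dim V) -> A) (a : A) :=
  \sum_(i < \dim V) (vbasis V)`_i * a * Y i.

Lemma casimir (V W : {vspace A}) YV YW b a :
  (V <= B)%VS -> (W <= B)%VS ->
  (forall v, v \in V -> (forall p, p \in V -> f (p * v) = 0) -> v = 0) ->
  isdual V YV -> isdual W YW -> b \in B ->
  (forall v, v \in V -> b * v \in W) -> (forall w, w \in W -> w * b \in V) ->
  b * S YV a = S YW a * b.
Proof.
move=> VB WB ndV dV dW bB bV bW.
have [YVV _] := dV; have [YWW _] := dW.
rewrite /S mulr_sumr mulr_suml.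
transitivity (\sum_(i < \dim V) \sum_(j < \dim W) f (b * (vbasis V)`_i * YW j) *: ((vbasis W)`_j * a * YV i)).
  apply: eq_bigr => i _.
  have biW := bV _ (basis_in i).
  rewrite !mulrA {1}(coord_vbasis biW) !mulr_suml; apply: eq_bigr => j _.
  by rewrite (coordE dW) // -!scalerAl.
rewrite exchange_big /=; apply: eq_bigr => j _.
have jbV := bW _ (YWW j).
rewrite -mulrA [YW j * b](expandE VB ndV dV jbV) !mulr_sumr; apply: eq_bigr => i _.
rewrite -!scalerAr mulrA; congr (_ *: _).
have xiB : (vbasis V)`_i \in B by apply: (subvP VB); apply: basis_in.
have yjB : YW j \in B by apply: (subvP WB).
by rewrite -mulrA fC ?mulB.
Qed.

Lemma memB0 x : x \in B -> x \in A0 -> x \in B0.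
Proof. by move=> h1 h2; apply/memv_capP. Qed.

Lemma nd0 v : v \in B0 -> (forall p, p \in B0 -> f (p * v) = 0) -> v = 0.
Proof.
move=> /memv_capP [vB vA] H; apply: (ND vB); move=> p pB.
have [p0 /memv_capP [p1B p1A]] := decB pB.
rewrite (decA p) mulrDl fD H // (fodd (B1_mem (mulB p1B vB) (m10 p1A vA))).
by rewrite addr0.
Qed.

Lemma nd1 v : v \in B1 -> (forall p, p \in B1 -> f (p * v) = 0) -> v = 0.
Proof.
move=> /memv_capP [vB vA] H; apply: (ND vB); move=> p pB.
have [/memv_capP [p0B p0A] p1] := decB pB.
rewrite (decA p) mulrDl fD (fodd (B1_mem (mulB p0B vB) (m01 p0A vA))) H //.
by rewrite add0r.
Qed.

Lemma B0B : (B0 <= B)%VS. Proof. exact: capvSl. Qed.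
Lemma B1B : (B1 <= B)%VS. Proof. exact: capvSl. Qed.

Lemma main_rev a : even_centralizer A0 B a -> graded_centralizer A0 A1 B a.
Proof.
move=> [aA Ha].
have [Y0 d0] := dual_exists B0B nd0.
have [Y1 d1] := dual_exists B1B nd1.
have [Y0V _] := d0; have [Y1V _] := d1.
have inB0 x : x \in B0 -> x \in B /\ x \in A0 by move/memv_capP.
have inB1 x : x \in B1 -> x \in B /\ x \in A1 by move/memv_capP.
have c00 b x : b \in B0 -> b * S Y0 x = S Y0 x * b.
  move=> /inB0 [bB bA]; apply: (casimir x B0B B0B nd0 d0 d0 bB).
    by move=> v /inB0 [vB vA]; apply: memB0; [exact: mulB | exact: m00].
  by move=> v /inB0 [vB vA]; apply: memB0; [exact: mulB | exact: m00].
have c01 b x : b \in B0 -> b * S Y1 x = S Y1 x * b.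
  move=> /inB0 [bB bA]; apply: (casimir x B1B B1B nd1 d1 d1 bB).
    by move=> v /inB1 [vB vA]; apply: B1_mem; [exact: mulB | exact: m01].
  by move=> v /inB1 [vB vA]; apply: B1_mem; [exact: mulB | exact: m10].
have c10 b x : b \in B1 -> b * S Y0 x = S Y1 x * b.
  move=> /inB1 [bB bA]; apply: (casimir x B0B B1B nd0 d0 d1 bB).
    by move=> v /inB0 [vB vA]; apply: B1_mem; [exact: mulB | exact: m10].
  by move=> v /inB1 [vB vA]; apply: memB0; [exact: mulB | exact: m11].
have c11 b x : b \in B1 -> b * S Y1 x = S Y0 x * b.
  move=> /inB1 [bB bA]; apply: (casimir x B1B B0B nd1 d1 d0 bB).
    by move=> v /inB1 [vB vA]; apply: memB0; [exact: mulB | exact: m11].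
  by move=> v /inB0 [vB vA]; apply: B1_mem; [exact: mulB | exact: m01].
set c0 := S Y0 1.
have x0B (i : 'I_(\dim B0)) : (vbasis B0)`_i \in B0 by apply: basis_in.
have x1B (i : 'I_(\dim B1)) : (vbasis B1)`_i \in B1 by apply: basis_in.
have c0B0 : c0 \in B0.
  apply: memv_suml => i _; rewrite mulr1.
  have [xB xA] := inB0 _ (x0B i); have [yB yA] := inB0 _ (Y0V i).
  by apply: memB0; [exact: mulB | exact: m00].
have c0c b : b \in B0 -> b * c0 = c0 * b by move=> hb; apply: c00.
have S0C x : (forall b, b \in B0 -> x * b = b * x) -> S Y0 x = x * c0.
  move=> hx; rewrite /S mulr_sumr; apply: eq_bigr => i _.
  by rewrite mulr1 -hx // mulrA.
have trf w : w \in B0 -> f (w * c0) = \tr (mxV B0 (amull w)).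
  move=> wB0; rewrite /c0 /S mulr_sumr f_sum /mxtrace; apply: eq_bigr => i _.
  have [wB wA] := inB0 _ wB0; have [xB xA] := inB0 _ (x0B i).
  rewrite mxE amullE (coordE d0) ?mulr1 ?mulrA //.
  by apply: memB0; [exact: mulB | exact: m00].
have B0mul x y : x \in B0 -> y \in B0 -> x * y \in B0.
  move=> /inB0 [xB xA] /inB0 [yB yA].
  by apply: memB0; [exact: mulB | exact: m00].
have one_B0 : (1 : A) \in B0 by apply: memB0; [exact: B1mem | exact: one0].
have nilK y : y \in B0 -> y * c0 = 0 -> exists m, y ^+ m = 0.
  move=> yB0 yc; apply: (nil_elem ch0 one_B0) => [v vB0|]; first exact: B0mul.
  case=> // k _; have ykB0 : y ^+ k.+1 \in B0.
    by rewrite -[y ^+ _]mulr1; apply: powV => // v hv; apply: B0mul.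
  by rewrite -trf // exprSr -mulrA yc mulr0 f0.
have K0 u : u \in B0 -> u * c0 = 0 -> u = 0.
  move=> uB0 uc; have [uB uA] := inB0 _ uB0; apply: (ND uB); move=> p pB.
  have [p0B0 /memv_capP [p1B p1A]] := decB pB.
  rewrite (decA p) mulrDl fD (fodd (B1_mem (mulB p1B uB) (m10 p1A uA))) addr0.
  have yB0 : P0 p * u \in B0 by apply: B0mul.
  have yc : P0 p * u * c0 = 0 by rewrite -mulrA uc mulr0.
  have [m ym] := nilK _ yB0 yc.
  apply: (tr_nil_elem (m := m)) => // v vB; apply: mulB => //.
  by have [] := inB0 _ yB0.
have [q qB0 qc] : exists2 q, q \in B0 & q * c0 = 1.
  pose g := amulr c0.
  have ker0 : (B0 :&: lker g = 0)%VS.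
    apply/eqP; rewrite -subv0; apply/subvP => v /memv_capP [vB0 vk].
    by rewrite memv0; apply/eqP; apply: K0 => //; move: vk; rewrite memv_ker lfunE /= => /eqP.
  have sub : (g @: B0 <= B0)%VS.
    by apply/subvP => w /memv_imgP [v vB0 ->]; rewrite lfunE /= B0mul.
  have eqB : (g @: B0)%VS == B0 by rewrite eqEdim sub (limg_dim_eq ker0) leqnn.
  have : (1 : A) \in (g @: B0)%VS by rewrite (eqP eqB).
  by move=> /memv_imgP [v vB0 ->]; exists v => //; rewrite lfunE.
have cq : c0 * q = 1 by rewrite -c0c.
have qC b : b \in B0 -> q * b = b * q.
  by move=> bB0; rewrite -[q * b]mulr1 -cq mulrA -(mulrA q b) c0c // mulrA qc mul1r.
have [qB qA] := inB0 _ qB0.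
pose h : F := 2%:R^-1.
have h2 : h + h = 1.
  rewrite -mulr2n -mulr_natr mulVf // natr_eq0F //.
pose a' := h *: (a * q).
have a'A : a' \in A0 by apply: memvZ; apply: m00.
have a'C b : b \in B0 -> a' * b = b * a'.
  move=> bB0; rewrite /a' -scalerAl -scalerAr; congr (_ *: _).
  by rewrite -mulrA (qC b bB0) mulrA (Ha b bB0) -mulrA.
have S0a : S Y0 a' = h *: a.
  by rewrite (S0C _ a'C) /a' -scalerAl -mulrA qc mulr1.
have S0A : S Y0 a' \in A0.
  apply: memv_suml => i _; have [_ xA] := inB0 _ (x0B i).
  by have [_ yA] := inB0 _ (Y0V i); apply: m00 => //; apply: m00.
have S1A : S Y1 a' \in A0.
  apply: memv_suml => i _; have [_ xA] := inB1 _ (x1B i).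
  by have [_ yA] := inB1 _ (Y1V i); apply: m11 => //; apply: m10.
exists (S Y0 a' + S Y1 a'), (S Y0 a' - S Y1 a'); split; last first.
  by rewrite addrACA subrr addr0 S0a -scalerDl h2 scale1r.
  split; first by apply: memvB.
  move=> b bB; have [b0B0 b1B1] := decB bB.
  have h0 : (S Y0 a' - S Y1 a') * P0 b = P0 b * (S Y0 a' - S Y1 a').
    by rewrite mulrBl mulrBr -(c00 _ _ b0B0) -(c01 _ _ b0B0).
  have h1 : (S Y0 a' - S Y1 a') * P1 b = - (P1 b * (S Y0 a' - S Y1 a')).
    by rewrite mulrBl mulrBr -(c11 _ _ b1B1) -(c10 _ _ b1B1) opprB.
  by rewrite /parity {1}(decA b) mulrDr h0 h1 mulrBl.
split.
  exact: (memvD S0A S1A).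
move=> b bB; have [b0B0 b1B1] := decB bB.
rewrite (decA b) !mulrDl !mulrDr.
rewrite -(c00 _ _ b0B0) -(c01 _ _ b0B0) -(c11 _ _ b1B1) -(c10 _ _ b1B1).
by rewrite addrACA [P1 b * S Y1 a' + _]addrC.
Qed.

Lemma main_fwd a : graded_centralizer A0 A1 B a -> even_centralizer A0 B a.
Proof.
move=> [z1 [z2 [[z1A H1] [z2A H2] ->]]]; split; first by apply: memvD.
move=> b /memv_capP [bB bA].
have pb : parity A0 A1 b = b by rewrite /parity P0_A0 // P1_A0 // subr0.
by rewrite mulrDl mulrDr H1 // H2 // pb.
Qed.

End Main.

Unset Implicit Arguments.

Theorem mainTheorem2 (F : closedFieldType) (charF0 : [pchar F] =i pred0)
  (A : falgType F) (A0 A1 B : {vspace A}) :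
  Z2_grading A0 A1 ->
  graded_semisimple A0 A1 fullv ->
  graded_subalgebra A0 A1 B ->
  graded_semisimple A0 A1 B ->
  forall a : A, graded_centralizer A0 A1 B a <-> even_centralizer A0 B a.
Proof.
move=> Hgr _ HB HssB a; split.
  exact: main_fwd.
exact: main_rev.
Qed.
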